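(* Let $\mu_e>0,\sigma^2>0$ and consider $N$ players, player $i$ having $n_i>0$ samples, federating with optimal fine-grained federation. Then the error of player $j$ is $$\frac{\mu_e/n_j}{V_j\cdot T}\left(1+\sigma^2\left(T-\frac{1}{V_j}\right)\right),$$ where $V_i=\sigma^2+\frac{\mu_e}{n_i}$ and $T=\sum_{i=1}^N\frac{1}{V_i}$.
   Context: In the mean-estimation model, $\mu_e$ is the average sampling noise and $\sigma^2$ the variance of players' true means. In fine-grained federation, player $j$ uses the weighted combination $\sum_i v_{ji}\hat\theta_i$ of all players' local estimates with real weights satisfying $\sum_{i=1}^N v_{ji}=1$; with weights $v_{j\cdot}$ its expected squared error is $$\mu_e\sum_{i=1}^N\frac{v_{ji}^2}{n_i}+\sigma^2\left(\sum_{i\neq j}v_{ji}^2+\Big(\sum_{i\neq j}v_{ji}\Big)^2\right).$$ Optimal fine-grained federation uses the weights minimizing this expression, and the player's error is this minimum value. *)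

(* Defs.v *)
From HB Require Import structures.
From mathcomp Require Import all_boot all_order all_algebra.
Set Implicit Arguments. Unset Strict Implicit. Unset Printing Implicit Defensive.
Import Order.TTheory GRing.Theory Num.Theory.
Local Open Scope ring_scope.

Definition fg_error (R : realFieldType) (N : nat) (mu_e sigma2 : R)
  (n : 'I_N -> nat) (j : 'I_N) (v : 'I_N -> R) : R :=
  mu_e * (\sum_(i < N) v i ^+ 2 / (n i)%:R)
  + sigma2 * (\sum_(i < N | i != j) v i ^+ 2
              + (\sum_(i < N | i != j) v i) ^+ 2).

Definition fg_weights (R : realFieldType) (N : nat) (v : 'I_N -> R) : Prop :=
  \sum_(i < N) v i = 1.

Definition optimal_fg_error (R : realFieldType) (N : nat) (mu_e sigma2 : R)
  (n : 'I_N -> nat) (j : 'I_N) (e : R) : Prop :=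
  (exists v : 'I_N -> R, fg_weights v /\ fg_error mu_e sigma2 n j v = e)
  /\ (forall v : 'I_N -> R, fg_weights v -> e <= fg_error mu_e sigma2 n j v).

Definition Vi (R : realFieldType) (N : nat) (mu_e sigma2 : R)
  (n : 'I_N -> nat) (i : 'I_N) : R := sigma2 + mu_e / (n i)%:R.

Definition Tsum (R : realFieldType) (N : nat) (mu_e sigma2 : R)
  (n : 'I_N -> nat) : R := \sum_(i < N) 1 / Vi mu_e sigma2 n i.

(* Main.v *)
Require Import Defs.
From HB Require Import structures.
From mathcomp Require Import all_boot all_order all_algebra.
From mathcomp Require Import ring lra.
Import Order.TTheory GRing.Theory Num.Theory.
Local Open Scope ring_scope.

Lemma sum_delta (R : realFieldType) (N : nat) (j : 'I_N) (f : 'I_N -> R) (c s : R) :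
  \sum_(i < N) f i * (c + (i == j)%:R * s) = c * \sum_(i < N) f i + s * f j.
Proof.
rewrite (eq_bigr (fun i => c * f i + s * (f i * (i == j)%:R))); last by move=> i _; ring.
rewrite big_split /= -mulr_sumr -mulr_sumr; congr (_ + _ * _).
rewrite (bigD1 j) //= eqxx mulr1 big1 ?addr0 // => i /negPf ->; by rewrite mulr0.
Qed.

Theorem lemmaA1 (R : realFieldType) (N : nat) (mu_e sigma2 : R)
  (n : 'I_N -> nat) (j : 'I_N) :
  0 < mu_e -> 0 < sigma2 -> (forall i : 'I_N, (0 < n i)%N) ->
  optimal_fg_error mu_e sigma2 n j
    ((mu_e / (n j)%:R) / (Vi mu_e sigma2 n j * Tsum mu_e sigma2 n)
     * (1 + sigma2 * (Tsum mu_e sigma2 n - 1 / Vi mu_e sigma2 n j))).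
Proof.
move=> hmu hs hn.
set V := Vi mu_e sigma2 n; set T := Tsum mu_e sigma2 n.
have hV : forall i, V i = sigma2 + mu_e / (n i)%:R by [].
have hT : T = \sum_(i < N) 1 / V i by [].
have nP : forall i, 0 < (n i)%:R :> R by move=> i; rewrite ltr0n.
have VP : forall i, 0 < V i.
  by move=> i; rewrite hV; apply: addr_gt0 => //; apply: divr_gt0.
have TP : 0 < T.
  rewrite hT (bigD1 j) //=; apply: ltr_pwDl; first by rewrite divr_gt0.
  by apply: sumr_ge0 => i _; rewrite divr_ge0 // ltW.
have Vn0 : forall i, V i != 0 by move=> i; rewrite gt_eqF.
have Tn0 : T != 0 by rewrite gt_eqF.
have haj : mu_e / (n j)%:R = V j - sigma2 by rewrite hV; ring.
rewrite haj.
set c := (V j - sigma2) / (V j * T).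
have hc : c = (V j - sigma2) / (V j * T) by [].
clearbody V T c.
pose w := fun i : 'I_N => (c + (i == j)%:R * sigma2) / V i.
pose G := fun v : 'I_N -> R => \sum_(i < N) V i * v i ^+ 2 - 2 * sigma2 * v j + sigma2.
have fgG : forall v, fg_weights v -> fg_error mu_e sigma2 n j v = G v.
  move=> v; rewrite /fg_weights /fg_error /G => hv.
  have h1 : \sum_(i < N | i != j) v i = 1 - v j.
    by rewrite -hv [in RHS](bigD1 j) //=; ring.
  have h2 : \sum_(i < N | i != j) v i ^+ 2 = \sum_(i < N) v i ^+ 2 - v j ^+ 2.
    by rewrite [in RHS](bigD1 j) //=; ring.
  rewrite h1 h2 mulr_sumr.
  have -> : \sum_(i < N) V i * v i ^+ 2
      = \sum_(i < N) mu_e * (v i ^+ 2 / (n i)%:R) + sigma2 * \sum_(i < N) v i ^+ 2.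
    rewrite mulr_sumr -big_split /=; apply: eq_bigr => i _.
    rewrite hV; field; by rewrite gt_eqF.
  ring.
have Vw : forall i, V i * w i = c + (i == j)%:R * sigma2.
  by move=> i; rewrite /w; field.
have wsum : \sum_(i < N) w i = 1.
  have -> : \sum_(i < N) w i = \sum_(i < N) (1 / V i) * (c + (i == j)%:R * sigma2).
    by apply: eq_bigr => i _; rewrite /w; field.
  rewrite sum_delta -hT hc; field.
  by rewrite Vn0 Tn0.
set E := (X in optimal_fg_error _ _ _ _ X).
have key : forall v, fg_weights v ->
    G v = E + \sum_(i < N) V i * (v i - w i) ^+ 2.
  move=> v hv.
  have -> : \sum_(i < N) V i * (v i - w i) ^+ 2
      = \sum_(i < N) V i * v i ^+ 2 - 2 * \sum_(i < N) v i * (V i * w i)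
        + \sum_(i < N) w i * (V i * w i).
    rewrite mulr_sumr -sumrB -big_split /=; apply: eq_bigr => i _; ring.
  have sd : forall f : 'I_N -> R, \sum_(i < N) f i * (V i * w i)
      = c * \sum_(i < N) f i + sigma2 * f j.
    by move=> f; rewrite -sum_delta; apply: eq_bigr => i _; rewrite Vw.
  rewrite !sd.
  rewrite hv wsum /G /E /w /= eqxx.
  have -> : true%:R = 1 :> R by [].
  move: (\sum_(i < N) V i * v i ^+ 2) => S.
  rewrite hc; field.
  by rewrite Vn0 Tn0.
split.
  exists w; split => //; rewrite fgG // key // big1 ?addr0 // => i _.
  by rewrite subrr expr0n mulr0.
move=> v hv; rewrite fgG // key // lerDl; apply: sumr_ge0 => i _.
by rewrite mulr_ge0 ?sqr_ge0 // ltW.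
Qed.
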